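(* An optimal digraph has no stable set of size at least $3$.
   Context: Digraphs are finite, loopless, with at most one edge $uv$ per ordered pair. A set $X$ of vertices is stable if $uv\notin E(G)$ for all $u,v\in X$. A digraph is $2$-free if no distinct $u,v$ have both $uv,vu$ as edges. A circular interval digraph is a digraph together with a fixed arrangement of its vertices in a circle such that for all distinct $u,v,w$ in clockwise order with $uw\in E(G)$, also $uv,vw\in E(G)$. For distinct $u,v$, $d(u,v) = 1 + |\{w: u,w,v \text{ distinct, in clockwise order}\}|$; this is the length of the ordered pair $uv$. A non-edge is an ordered pair $(u,v)$ of distinct vertices with neither $uv$ nor $vu$ an edge; its length is $d(u,v)$. $\xi(G)$ is the number of pairs $(uv,(w,x))$ with $uv\in E(G)$, $(w,x)$ a non-edge, $d(u,v)>d(w,x)$. $\tilde P_3(G)$ is the number of triples $(a,b,c)$ of distinct vertices with $ab,bc\in E(G)$ and $ac,ca\notin E(G)$. For fixed $n\ge 4$, $G$ is optimal if it is a $2$-free circular interval digraph on $n$ vertices maximizing $\tilde P_3$ among all such digraphs and, subject to this, minimizing $\xi(G)$. *)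

(* Defs.v *)
From mathcomp Require Import all_boot.
Set Implicit Arguments. Unset Strict Implicit. Unset Printing Implicit Defensive.

(* A digraph on n vertices together with a circular arrangement is modelled
   with vertex set 'I_n, the clockwise order being the cyclic order 0,1,...,n-1.
   The edge relation is a boolean relation e (at most one edge per ordered pair
   is automatic). *)

Definition dist (n : nat) (u v : 'I_n) : nat := (v + n - u) %% n.

Definition cw (n : nat) (u v w : 'I_n) : bool :=
  [&& u != v, v != w, u != w & dist u v < dist u w].

Definition loopless (n : nat) (e : rel 'I_n) : Prop := forall u, ~~ e u u.

Definition two_free (n : nat) (e : rel 'I_n) : Prop :=
  forall u v, u != v -> ~~ (e u v && e v u).

Definition circular_interval (n : nat) (e : rel 'I_n) : Prop :=
  loopless e /\
  forall u v w, cw u v w -> e u w -> e u v && e v w.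

Definition admissible (n : nat) (e : rel 'I_n) : Prop :=
  two_free e /\ circular_interval e.

Definition nonedge (n : nat) (e : rel 'I_n) (w x : 'I_n) : bool :=
  [&& w != x, ~~ e w x & ~~ e x w].

Definition xi (n : nat) (e : rel 'I_n) : nat :=
  #|[pred p : ('I_n * 'I_n) * ('I_n * 'I_n) |
      [&& e p.1.1 p.1.2, nonedge e p.2.1 p.2.2 &
          dist p.2.1 p.2.2 < dist p.1.1 p.1.2]]|.

Definition P3 (n : nat) (e : rel 'I_n) : nat :=
  #|[pred t : 'I_n * 'I_n * 'I_n |
      [&& t.1.1 != t.1.2, t.1.2 != t.2, t.1.1 != t.2,
          e t.1.1 t.1.2, e t.1.2 t.2, ~~ e t.1.1 t.2 & ~~ e t.2 t.1.1]]|.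

Definition optimal (n : nat) (e : rel 'I_n) : Prop :=
  admissible e /\
  (forall e' : rel 'I_n, admissible e' -> P3 e' <= P3 e) /\
  (forall e' : rel 'I_n, admissible e' -> P3 e' = P3 e -> xi e <= xi e').

Definition stable (n : nat) (e : rel 'I_n) (X : {set 'I_n}) : Prop :=
  forall u v, u \in X -> v \in X -> ~~ e u v.

(* Main.v *)
Require Import Defs.
From mathcomp Require Import all_boot zify.
Set Implicit Arguments. Unset Strict Implicit. Unset Printing Implicit Defensive.


Lemma ord_gt0 n (u : 'I_n) : 0 < n.
Proof. exact: leq_ltn_trans (leq0n u) (ltn_ord u). Qed.

Definition sh n (u : 'I_n) (k : nat) : 'I_n := Ordinal (ltn_pmod (u + k) (ord_gt0 u)).

Lemma distP n (u v : 'I_n) :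
  (u <= v /\ dist u v = v - u) \/ (v < u /\ dist u v = v + n - u).
Proof.
rewrite /dist; have hu := ltn_ord u; have hv := ltn_ord v.
case: (leqP u v) => h; [left|right]; split => //.
  have -> : v + n - u = (v - u) + n by lia.
  rewrite modnDr modn_small //; lia.
rewrite modn_small //; lia.
Qed.

Lemma dist_lt n (u v : 'I_n) : dist u v < n.
Proof. have := ltn_ord u; have := ltn_ord v; case: (distP u v); lia. Qed.

Lemma distxx n (u : 'I_n) : dist u u = 0.
Proof. case: (distP u u); lia. Qed.

Lemma dist_inj n (o : 'I_n) : injective (dist o).
Proof.
move=> a b h; apply: val_inj => /=.
have := ltn_ord a; have := ltn_ord b; have := ltn_ord o.
case: (distP o a); case: (distP o b); lia.
Qed.

Lemma dist_eq n (o a b : 'I_n) : (a == b) = (dist o a == dist o b).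
Proof. by rewrite (inj_eq (@dist_inj n o)). Qed.

Lemma distB n (o a b : 'I_n) : dist o a <= dist o b -> dist a b = dist o b - dist o a.
Proof.
have := ltn_ord a; have := ltn_ord b; have := ltn_ord o.
case: (distP o a); case: (distP o b); case: (distP a b); lia.
Qed.

Lemma distB' n (o a b : 'I_n) : dist o b < dist o a -> dist a b = dist o b + n - dist o a.
Proof.
have := ltn_ord a; have := ltn_ord b; have := ltn_ord o.
case: (distP o a); case: (distP o b); case: (distP a b); lia.
Qed.

Lemma cw_base n (o a b c : 'I_n) : cw a b c =
  [|| (dist o a < dist o b) && (dist o b < dist o c),
      (dist o b < dist o c) && (dist o c < dist o a) |
      (dist o c < dist o a) && (dist o a < dist o b)].
Proof.
rewrite /cw (dist_eq o a b) (dist_eq o b c) (dist_eq o a c).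
have := dist_lt o a; have := dist_lt o b; have := dist_lt o c => h1 h2 h3.
case: (leqP (dist o a) (dist o b)) => hab.
  rewrite (distB hab).
  case: (leqP (dist o a) (dist o c)) => hac.
    rewrite (distB hac). apply/idP/idP => ?; lia.
  rewrite (distB' hac). apply/idP/idP => ?; lia.
rewrite (distB' hab).
case: (leqP (dist o a) (dist o c)) => hac.
  rewrite (distB hac). apply/idP/idP => ?; lia.
rewrite (distB' hac). apply/idP/idP => ?; lia.
Qed.

Lemma shE n (u : 'I_n) k : k < n ->
  (sh u k : nat) = if u + k < n then u + k else u + k - n.
Proof.
move=> hk; have hu := ltn_ord u; rewrite /=.
case: ifP => h; first by rewrite modn_small.
have -> : u + k = (u + k - n) + n by lia.
rewrite modnDr modn_small; lia.
Qed.

Lemma dist_sh n (u : 'I_n) k : k < n -> dist u (sh u k) = k.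
Proof.
move=> hk; have hu := ltn_ord u; have hs := shE u hk.
case: (distP u (sh u k)); case: ifP hs; lia.
Qed.

Lemma sh_dist n (u v : 'I_n) : sh u (dist u v) = v.
Proof. by apply: (@dist_inj n u); rewrite dist_sh // dist_lt. Qed.

Lemma sh0 n (u : 'I_n) : sh u 0 = u.
Proof. by apply: val_inj; rewrite /= addn0 modn_small. Qed.

Lemma shS n (u : 'I_n) k : sh u k.+1 = sh (sh u k) 1.
Proof. by apply: val_inj; rewrite /= modnDml addn1 addnS. Qed.


Lemma card_lt_inj (T : finType) (A B : {pred T}) (f : T -> T) t0 :
  {in A &, injective f} -> (forall t, t \in A -> f t \in B) -> t0 \in B ->
  (forall t, t \in A -> f t != t0) -> #|A| < #|B|.
Proof.
move=> fi fB t0B fn.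
rewrite -(card_in_imset fi).
apply: proper_card; apply/properP; split.
  by apply/subsetP => _ /imsetP[t tA ->]; exact: fB.
exists t0 => //; apply/imsetP => -[t tA ht].
by move: (fn t tA); rewrite -ht eqxx.
Qed.

Definition P3c n (e : rel 'I_n) (t : 'I_n * 'I_n * 'I_n) :=
  [&& t.1.1 != t.1.2, t.1.2 != t.2, t.1.1 != t.2,
      e t.1.1 t.1.2, e t.1.2 t.2, ~~ e t.1.1 t.2 & ~~ e t.2 t.1.1].

Lemma P3E n (e : rel 'I_n) : P3 e = #|[pred t | P3c e t]|.
Proof. by []. Qed.

Lemma ne_l n (e : rel 'I_n) a b c :
  (forall u v w, cw u v w -> e u w -> e u v && e v w) ->
  cw a b c -> ~~ e a b -> ~~ e a c.
Proof. by move=> ci h nab; apply/negP => /(ci _ _ _ h)/andP[hab _]; rewrite hab in nab. Qed.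

Lemma ne_r n (e : rel 'I_n) a b c :
  (forall u v w, cw u v w -> e u w -> e u v && e v w) ->
  cw a b c -> ~~ e b c -> ~~ e a c.
Proof. by move=> ci h nbc; apply/negP => /(ci _ _ _ h)/andP[_ hbc]; rewrite hbc in nbc. Qed.


Definition isob n (e : rel 'I_n) v : bool := [forall u, ~~ e v u && ~~ e u v].

Definition cyc n : rel 'I_n := [rel u t | t == sh u 1].

Lemma cyc_adm n : 4 <= n -> admissible (@cyc n).
Proof.
move=> n4; split; [|split].
- move=> u v uv; apply/negP => /andP[/eqP h1 /eqP h2].
  have d1 : dist u v = 1 by rewrite h1 dist_sh //; lia.
  have d2 : dist v u = 1 by rewrite h2 dist_sh //; lia.
  have : dist u u < dist u v by rewrite distxx d1.
  move/distB'; rewrite d2 d1 distxx; lia.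
- move=> u; rewrite /cyc /= (dist_eq u) dist_sh ?distxx //; lia.
- move=> u v w /= c /eqP hw; subst w; move: c.
  rewrite (cw_base u) distxx dist_sh; lia.
Qed.

Lemma iso_improve n (e : rel 'I_n) v : 4 <= n -> admissible e -> isob e v ->
  exists e' : rel 'I_n, admissible e' /\ P3 e < P3 e'.
Proof.
move=> n4 [tf [ll ci]] iv.
case: (boolP [exists u, isob e u && ~~ isob e (sh u 1)]).
- case/existsP => u /andP[iu /forallPn[c]].
  rewrite negb_and !negbK => hc.
  set w := sh u 1 in hc *.
  have w1 : dist u w = 1 by rewrite dist_sh //; lia.
  have hwc : e w c.
    case/orP: hc => // hcw; exfalso.
    have cu : c != u by apply/eqP => cu; move: iu => /forallP/(_ w); rewrite -cu hcw.
    have cw' : c != w by apply/eqP => cw'; move: (ll c); rewrite {2}cw' hcw.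
    have : cw c u w.
      move: cu cw'; rewrite (cw_base u) (dist_eq u c u) (dist_eq u c w) distxx w1.
      have := dist_lt u c; lia.
    move/ci/(_ hcw)/andP => [hcu _].
    by move: iu => /forallP/(_ c); rewrite hcu andbF.
  have iuF : forall t, (e u t = false) /\ (e t u = false).
    by move=> t; move: iu => /forallP/(_ t)/andP[/negbTE -> /negbTE ->].
  have uw : u != w by rewrite (dist_eq u) distxx w1.
  have wc : w != c by apply/eqP => wc; move: (ll w); rewrite {2}wc hwc.
  have uc : u != c by apply/eqP => uc; move: (iuF w) => [_]; rewrite -uc in hwc; rewrite hwc.
  exists [rel a b | e a b || (a == u) && (b == w)]; split; [split; [|split]|].
  + move=> a b ab; apply/negP => /andP[/orP[h1|/andP[/eqP h1 /eqP h2]] /orP[h3|/andP[/eqP h3 /eqP h4]]].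
    * by move: (tf a b ab); rewrite h1 h3.
    * by move: h1; rewrite h3 h4 (iuF w).2.
    * by move: h3; rewrite h1 h2 (iuF w).2.
    * by move: uw; rewrite -h1 -h4 eqxx.
  + move=> a; rewrite /= negb_or (negbTE (ll a)) /=; apply/negP => /andP[/eqP -> /eqP h].
    by move: uw; rewrite h eqxx.
  + move=> a b d h /= /orP[had|/andP[/eqP ha /eqP hd]].
      by have /andP[-> ->] := ci _ _ _ h had.
    subst a d; move: h; rewrite (cw_base u) distxx w1; lia.
  + rewrite !P3E; apply: (@card_lt_inj _ _ _ id (u, w, c)).
    * by move=> ? ? _ _.
    * move=> [[a b] d]; rewrite !inE /P3c /= => /and5P[h1 h2 h3 h4 /and3P[h5 h6 h7]].
      rewrite h1 h2 h3 h4 h5 /=.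
      apply/andP; split; apply/norP; split => //; apply/negP => /andP[/eqP ha _]; subst.
        by move: (iuF b) => [] h _; rewrite h in h4.
      by move: (iuF b) => [] _ h; rewrite h in h5.
    * rewrite inE /P3c /= uw wc uc hwc /=.
      move: (iuF c) => [h h']; apply/and3P; split.
      - by apply/orP; right; rewrite !eqxx.
      - by rewrite h eqxx eq_sym.
      - by rewrite h' eq_sym (negbTE uc).
    * move=> [[a b] d]; rewrite inE /P3c /= => /and5P[_ _ _ eab /and3P[_ _ _]].
      by apply/eqP => -[ha hb _]; subst; move: (iuF w) => [] ; rewrite eab.
- move/existsPn => H.
  have allk : forall k, isob e (sh v k).
    elim => [|k IH]; first by rewrite sh0.
    by rewrite shS; move: (H (sh v k)); rewrite IH /= negbK.
  have all : forall u, isob e u by move=> u; rewrite -(sh_dist v u); exact: allk.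
  exists (@cyc n); split; first exact: cyc_adm.
  have noA : forall t, t \in [pred t | P3c e t] -> False.
    move=> [[a b] d]; rewrite inE /P3c /= => /and5P[_ _ _ eab /and3P[_ _ _]].
    by move: (all a) => /forallP/(_ b); rewrite eab.
  rewrite !P3E; apply: (@card_lt_inj _ _ _ id (v, sh v 1, sh v 2)).
  * by move=> ? ? /noA.
  * by move=> ? /noA.
  * rewrite inE /P3c /= /cyc /= -(shS v 1) -(shS v 2) !(dist_eq v) !dist_sh ?distxx; lia.
  * by move=> ? /noA.
Qed.


Ltac keep_arith :=
  repeat match goal with
  | H : ?T |- _ =>
      lazymatch T with
      | is_true (leq _ _) => fail
      | is_true (andb (leq _ _) (leq _ _)) => fail
      | is_true (negb (andb (leq _ _) (leq _ _))) => fail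
      | @eq ?A _ _ => tryif unify A nat then fail else clear H
      | is_true (negb (@eq_op _ (_ : nat) _)) => fail
      | _ => clear H
      end
  end.
Ltac lia' := keep_arith; lia.

Ltac cwx x := rewrite (cw_base x) ?distxx; lia'.

Definition ST n (e : rel 'I_n) x y z :=
  [&& cw x y z, ~~ e x y, ~~ e y x, ~~ e y z, ~~ e z y, ~~ e x z & ~~ e z x].

Lemma mkST n (e : rel 'I_n) x y z : cw x y z -> ~~ e x y -> ~~ e y x -> ~~ e y z ->
  ~~ e z y -> ~~ e x z -> ~~ e z x -> ST e x y z.
Proof. by move=> *; apply/and5P; split => //; apply/and3P. Qed.

Lemma ST_rot n (e : rel 'I_n) x y z : ST e x y z -> ST e y z x.
Proof.
case/and5P => c h1 h2 h3 /and3P[h4 h5 h6]; apply: mkST => //.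
by move: c; rewrite !(cw_base x) distxx; lia'.
Qed.


Lemma improve3 n (e : rel 'I_n) x0 y0 z0 : 4 <= n -> admissible e -> ST e x0 y0 z0 ->
  exists e' : rel 'I_n, admissible e' /\ P3 e < P3 e'.
Proof.
move=> n4 adm h0; have [tf [ll ci]] := adm.
pose Q g := [exists x, exists y, exists z, ST e x y z && (dist x y == g)].
have exQ : exists g, Q g.
  exists (dist x0 y0); apply/existsP; exists x0; apply/existsP; exists y0.
  by apply/existsP; exists z0; rewrite h0 eqxx.
case: (ex_minnP exQ) => g /existsP[x /existsP[y /existsP[z /andP[hST /eqP hg]]]] gmin.
have gm : forall a b c, ST e a b c -> g <= dist a b.
  move=> a b c h; apply: gmin; apply/existsP; exists a; apply/existsP; exists b.
  by apply/existsP; exists c; rewrite h eqxx.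
have hST' := hST; case/and5P: hST' => cxyz nxy nyx nyz /and3P[nzy nxz nzx].
have hpz : 0 < g < dist x z by move: cxyz; rewrite (cw_base x) distxx hg; lia'.
have pzn := dist_lt x z.
have gyz : g <= dist x z - g.
  by have := gm _ _ _ (ST_rot hST); rewrite (@distB _ x y z) ?hg; lia'.
have gzx : g <= n - dist x z.
  by have := gm _ _ _ (ST_rot (ST_rot hST)); rewrite (@distB' _ x z x) ?distxx; lia'.
have hi : forall v, 0 < dist x v < g -> e x v.
  move=> v hv; apply/negPn/negP => nxv.
  have : ST e x v z.
    apply: mkST => //.
    - cwx x.
    - by apply: (ne_r ci (b:=y)) => //; cwx x.
    - by apply: (ne_r ci (b:=y)) => //; cwx x.
    - by apply: (ne_l ci (b:=x)) => //; cwx x.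
  by move/gm; lia'.
have hii : forall v, 0 < dist x v < g -> e v y.
  move=> v hv; apply/negPn/negP => nvy.
  have : ST e v y z.
    apply: mkST => //.
    - cwx x.
    - by apply: (ne_l ci (b:=z)) => //; cwx x.
    - by apply: (ne_r ci (b:=y)) => //; cwx x.
    - by apply: (ne_l ci (b:=x)) => //; cwx x.
  by move/gm; rewrite (@distB _ x v y); lia'.
have hiii : forall w, g < dist x w < g + g -> e y w.
  move=> w hw; apply/negPn/negP => nyw.
  have := dist_lt x w => hwn.
  have : ST e y w x.
    apply: mkST => //.
    - cwx x.
    - by apply: (ne_r ci (b:=x)) => //; cwx x.
    - by apply: (ne_r ci (b:=z)) => //; cwx x.
    - by apply: (ne_l ci (b:=y)) => //; cwx x.
  by move/gm; rewrite (@distB _ x y w); lia'.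
have hiv : forall p, n - g < dist x p -> e p x.
  move=> p hp; apply/negPn/negP => npx.
  have := dist_lt x p => hpn.
  have : ST e p x y.
    apply: mkST => //.
    - cwx x.
    - by apply: (ne_l ci (b:=y)) => //; cwx x.
    - by apply: (ne_r ci (b:=x)) => //; cwx x.
    - by apply: (ne_l ci (b:=z)) => //; cwx x.
  by move/gm; rewrite (@distB' _ x p x) ?distxx; lia'.
have xy : x != y by rewrite (dist_eq x) distxx hg; lia'.
have n1 : n - 1 < n by lia'.
set p := sh x (n - 1).
have hp : dist x p = n - 1 by rewrite dist_sh.
have [epx | nepx] := boolP (e p x); last first.
  have g1 : g = 1.
    case: (leqP g 1) => hg1; first lia'.
    by move: nepx; rewrite hiv // hp; lia'.
  apply: (iso_improve (v:=x) n4 adm).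
  apply/forallP => u; apply/andP; split.
    have [-> | ux] := eqVneq u x; first exact: ll.
    have [-> | uy] := eqVneq u y; first exact: nxy.
    apply: (ne_l ci (b:=y)) => //.
    move: ux uy; rewrite (cw_base x) !(dist_eq x) distxx hg g1 => ux uy.
    have := dist_lt x u; lia'.
  have [-> | ux] := eqVneq u x; first exact: ll.
  have [-> | up] := eqVneq u p; first exact: nepx.
  apply: (ne_r ci (b:=p)) => //.
  move: ux up; rewrite (cw_base x) !(dist_eq x) distxx hp => ux up.
  have := dist_lt x u; lia'.
exists [rel a b | e a b || (a == x) && (b == y)]; split.
  split; [|split].
  - move=> a b ab; apply/negP => /andP[/orP[h1|/andP[/eqP h1 /eqP h2]] /orP[h3|/andP[/eqP h3 /eqP h4]]].
    + by move: (tf a b ab); rewrite h1 h3.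
    + by move: h1; rewrite h3 h4 (negbTE nyx).
    + by move: h3; rewrite h1 h2 (negbTE nyx).
    + by move: xy; rewrite -h1 -h4 eqxx.
  - move=> a; rewrite /= negb_or (negbTE (ll a)) /=; apply/negP => /andP[/eqP -> /eqP h].
    by move: xy; rewrite h eqxx.
  - move=> a b d h /= /orP[had|/andP[/eqP ha /eqP hd]].
      by have /andP[-> ->] := ci _ _ _ h had.
    subst a d.
    have hb : 0 < dist x b < g by move: h; rewrite (cw_base x) distxx hg; lia'.
    by rewrite hi // hii.
pose f (t : 'I_n * 'I_n * 'I_n) :=
  if (t.1.1 == x) && (t.2 == y) && (0 < dist x t.1.2 < g)
  then (x, y, sh x (g + dist x t.1.2)) else t.
rewrite !P3E; apply: (@card_lt_inj _ _ _ f (p, x, y)).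
- move=> [[a1 b1] c1] [[a2 b2] c2]; rewrite !inE /P3c /= => h1 h2; rewrite /f /=.
  case: ifP => s1; case: ifP => s2 => //.
  + move=> /(congr1 (fun t : 'I_n * 'I_n * 'I_n => dist x t.2)) /= hd.
    move/andP: s1 => [/andP[/eqP -> /eqP ->] hb1].
    move/andP: s2 => [/andP[/eqP -> /eqP ->] hb2].
    move: hd; rewrite !dist_sh; try lia'.
    by move=> hd; have -> : b1 = b2 by apply: (@dist_inj _ x); lia'.
  + move=> [ha hb hc]; move: h2; rewrite -ha -hb.
    by case/and5P => _ _ _ /negP; rewrite (negbTE nxy).
  + move=> [ha hb hc]; move: h1; rewrite ha hb.
    by case/and5P => _ _ _ /negP; rewrite (negbTE nxy).
- move=> [[a b] c]; rewrite !inE /P3c /= => /and5P[hab hbc hac eab /and3P[ebc nac nca]].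
  rewrite /f /=; case: ifP => s.
  + move/andP: s => [/andP[/eqP ha /eqP hc] hb].
    have hw : dist x (sh x (g + dist x b)) = g + dist x b by rewrite dist_sh; lia'.
    apply/and5P; split.
    * exact: xy.
    * by rewrite (dist_eq x) hg hw; lia'.
    * by rewrite (dist_eq x) distxx hw; lia'.
    * by rewrite /= !eqxx orbT.
    apply/and3P; split; [|apply/norP; split..].
    * by rewrite /= hiii // hw; lia'.
    * by apply: (ne_l ci (b:=y)) => //; rewrite (cw_base x) distxx hg hw; lia'.
    * by rewrite eqxx /= (dist_eq x) hg hw; lia'.
    * by apply: (ne_r ci (b:=z)) => //; rewrite (cw_base x) distxx hw; lia'.
    * by rewrite (dist_eq x) hw distxx; lia'.
  + apply/and5P; split => //=; first by rewrite eab.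
    apply/and3P; split; [by rewrite ebc|apply/norP; split => //..].
    * apply/negP => /andP[/eqP ax /eqP cy]; subst a c.
      move: s; rewrite !eqxx /= => s.
      have : cw x y b.
        move: hab hbc; rewrite (cw_base x) !(dist_eq x) distxx hg => hab hbc.
        move/negbT: s => s; have := dist_lt x b; lia'.
      by move/ci/(_ eab)/andP => [h _]; rewrite h in nxy.
    * apply/negP => /andP[/eqP cx /eqP ay]; subst a c.
      have [bz|bz] := eqVneq b z; first by subst b; rewrite eab in nyz.
      have [hb|hb] := boolP (g < dist x b < dist x z).
        have : cw b z x by rewrite (cw_base x) distxx; lia'.
        by move/ci/(_ ebc)/andP => [_ h]; rewrite h in nzx.
      have : cw y z b.
        move: bz hab hbc; rewrite (cw_base x) !(dist_eq x) distxx hg => bz hab hbc.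
        have := dist_lt x b; lia'.
      by move/ci/(_ eab)/andP => [h _]; rewrite h in nyz.
- apply/and5P; split.
  + by rewrite (dist_eq x) hp distxx; lia'.
  + exact: xy.
  + by rewrite (dist_eq x) hp hg; lia'.
  + by rewrite /= epx.
  apply/and3P; split; [by rewrite /= !eqxx orbT|apply/norP; split..].
  + by apply: (ne_r ci (b:=x)) => //; rewrite (cw_base x) distxx hg hp; lia'.
  + by rewrite (dist_eq x) hp distxx; lia'.
  + have [pz|pz] := eqVneq p z; first by rewrite pz.
    apply: (ne_l ci (b:=z)) => //.
    move: pz; rewrite (cw_base x) (dist_eq x) hg hp => pz; lia'.
  + by rewrite eq_sym (negbTE xy).
- move=> [[a b] c]; rewrite inE /P3c /= => /and5P[_ _ _ eab /and3P[ebc _ _]].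
  rewrite /f /=; case: ifP => s.
    apply/eqP => -[px _ _]; have := hp; rewrite px distxx; lia'.
  apply/eqP => -[ha hb hc]; move: ebc; rewrite hb hc.
  by rewrite (negbTE nxy).
Qed.

Unset Implicit Arguments.

Theorem mainTheorem10 (n : nat) (e : rel 'I_n) :
  4 <= n -> optimal e ->
  forall X : {set 'I_n}, stable e X -> #|X| < 3.
Proof.
move=> n4 [adm [mx _]] X st; rewrite ltnNge; apply/negP.
move=> /card_gt2P[a [b [c [[aX bX cX] [ab bc ca]]]]].
have key : exists x y z, ST e x y z.
  have [h|h] := boolP (cw a b c).
    by exists a, b, c; apply: mkST; rewrite // st.
  exists a, c, b; apply: mkST; rewrite ?st //.
  move: h ab bc ca; rewrite !(cw_base a) !(dist_eq a) distxx => h ab bc ca.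
  have := dist_lt a b; have := dist_lt a c; lia.
case: key => x [y [z h]]; have [e' [adm' lt]] := improve3 n4 adm h.
by move: (mx e' adm'); rewrite leqNgt lt.
Qed.
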